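(* For an integer $d\geqslant 0$ and a real $x>0$, let $K_d(x)$ be the largest integer $k$ such that $(k-d)k\leqslant dx$; equivalently $K_d(x)=\lfloor (d+\sqrt{d^2+4dx})/2\rfloor$. Then for integers $d$ and reals $x$ with $0\leqslant d\leqslant x$ and $x\geqslant 1$, $$\sum_{K_{d}(x)<k\leqslant K_{d+1}(x)}k^2=\frac{(d+1)\sqrt{d+1}-d\sqrt{d}}{3}\,x^{3/2}+O\bigl((d+1)x\bigr),$$ the sum being over integers $k$, with an absolute implied constant.
   Context: $\lfloor t\rfloor$ denotes the integer part of the real number $t$. *)

(* Defs.v *)
From mathcomp Require Import all_boot all_order all_algebra.
From mathcomp Require Import all_reals.
Set Implicit Arguments. Unset Strict Implicit. Unset Printing Implicit Defensive.
Import Order.TTheory GRing.Theory Num.Theory.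
Local Open Scope ring_scope.

Definition Kd {R : realType} (d : nat) (x : R) : int :=
  Num.floor ((d%:R + Num.sqrt (d%:R ^+ 2 + 4 * d%:R * x)) / 2).

(* sum of k^2 over integers k with K_d(x) < k <= K_{d+1}(x).
   Since K_d(x) >= 0, such k are natural numbers in [0, K_{d+1}(x)]. *)
Definition Ssum {R : realType} (d : nat) (x : R) : R :=
  \sum_(0 <= k < `|Kd d.+1 x|%N.+1 | (Kd d x < k%:Z)%R) (k%:R) ^+ 2.

(* Main.v *)
Require Import Defs.
From mathcomp Require Import all_boot all_order all_algebra.
From mathcomp Require Import all_reals.
From mathcomp Require Import ring lra.
Import Order.TTheory GRing.Theory Num.Theory.
Local Open Scope ring_scope.

Section K.
Variable R : realType.
Definition S3 (k : R) := k * (k+1) * (2*k+1) / 6.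

Lemma sumsq (N : nat) : \sum_(0 <= k < N.+1) (k%:R : R)^+2 = S3 N%:R.
Proof.
elim: N => [|N IH]; first by rewrite big_nat1 /S3; field.
by rewrite big_nat_recr //= IH /S3; field.
Qed.

Lemma sum_split (aN bN : nat) : (aN <= bN)%N ->
  \sum_(0 <= k < bN.+1 | (aN%:Z < k%:Z)%R) (k%:R : R)^+2 = S3 bN%:R - S3 aN%:R.
Proof.
move=> ab.
rewrite big_mkcond /=.
rewrite (@big_cat_nat _ _ _ aN.+1) //=.
have -> : \sum_(0 <= k < aN.+1) (if (aN < k)%N then (k%:R : R)^+2 else 0) = 0.
  rewrite big_nat_cond big1 // => k /andP[/andP[_ kl] _].
  by rewrite ltnNge -ltnS kl.
rewrite add0r.
have -> : \sum_(aN.+1 <= k < bN.+1) (if (aN < k)%N then (k%:R : R)^+2 else 0)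
   = \sum_(aN.+1 <= k < bN.+1) (k%:R : R)^+2.
  by apply: eq_big_nat => k /andP[kl _]; rewrite kl.
rewrite -!sumsq (@big_cat_nat _ _ _ aN.+1 0 bN.+1) //=.
by rewrite addrC addrK.
Qed.
Lemma key (n x Tn Tm Qn Qm : R) : 0 <= n -> 1 <= x -> n <= x ->
  0 <= Tn -> Tn^+2 = n^+2 + 4*n*x ->
  0 <= Tm -> Tm^+2 = (n+1)^+2 + 4*(n+1)*x ->
  0 <= Qn -> Qn^+2 = 4*n*x -> 0 <= Qm -> Qm^+2 = 4*(n+1)*x ->
  `| ((n+1)^+2 * Tm + (n+1)*x*(Tm - Qm)) - (n^+2 * Tn + n*x*(Tn-Qn)) | <= 30 * ((n+1)*x).
Proof.
move=> n0 x1 nx Tn0 eTn Tm0 eTm Qn0 eQn Qm0 eQm.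
have TnTm : Tn <= Tm by nra.
have QnQm : Qn <= Qm by nra.
have nTn : n <= Tn by nra.
have mTm : n + 1 <= Tm by nra.
have QnTn : Qn <= Tn by nra.
have QmTm : Qm <= Tm by nra.
have Tm4 : Tm <= 4 * x by nra.
have Qm1 : 0 < Qm by nra.
have P1 : (n+1)^+2 * Tm - n^+2 * Tn <= 15 * ((n+1)*x).
  have h1 : n^+2 * (Tm - Tn) <= 7 * n * x.
    have : n * (Tm - Tn) * (Tm + Tn) <= 7 * n * x by nra.
    nra.
  nra.
have P1' : 0 <= (n+1)^+2 * Tm - n^+2 * Tn by nra.
set Sn := Tn + Qn. set Sm := Tm + Qm.
set Dn := Tn - Qn. set Dm := Tm - Qm.
have eDn : Dn * Sn = n^+2 by rewrite /Dn /Sn; nra.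
have eDm : Dm * Sm = (n+1)^+2 by rewrite /Dm /Sm; nra.
have Dn0 : 0 <= Dn by rewrite /Dn; lra.
have Dm0 : 0 <= Dm by rewrite /Dm; lra.
have Smpos : n + 1 <= Sm by rewrite /Sm; lra.
have Dmm : Dm <= n + 1 by nra.
have P2 : `|n * (Dm - Dn)| <= 3 * (n+1).
  have [->|npos] := eqVneq n 0.
    rewrite mul0r normr0; lra.
  have n0' : 0 < n by rewrite lt_def npos.
  have Snpos : n <= Sn by rewrite /Sn; lra.
  have SS : 0 < Sn * Sm by nra.
  have E : n * (Dm - Dn) * (Sn * Sm) = n * (((n+1)^+2 - n^+2) * Sn - n^+2 * (Sm - Sn)).
    have -> : n * (Dm - Dn) * (Sn * Sm) = n * ((Dm * Sm) * Sn - (Dn * Sn) * Sm) by ring.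
    rewrite eDm eDn; ring.
  have U : n * ((n+1)^+2 - n^+2) * Sn <= 2 * (n+1) * (Sn * Sm) by nra.
  have L1 : n^+3 * (Tm - Tn) <= 7/4 * (n+1) * (Sn * Sm).
    have a1 : Tn * (Tm - Tn) <= 7 * x by nra.
    have a2 : n^+3 * (Tm - Tn) <= 7 * n^+2 * x.
      have c1 : n * (Tm - Tn) <= Tn * (Tm - Tn) by apply: ler_wpM2r; lra.
      have c2 : n^+2 * (n * (Tm - Tn)) <= n^+2 * (7 * x).
        apply: ler_wpM2l; [nra | lra].
      have -> : n^+3 = n^+2 * n by rewrite exprS mulrC.
      lra.
    have a3 : 4 * n^+2 * x <= (n+1) * (Sn * Sm).
      have d1 : Tn * Tn <= Sn * Sm by rewrite /Sn /Sm; apply: ler_pM; lra.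
      have d2 : 4 * n * x <= Sn * Sm by nra.
      have d3 : n * (4 * n * x) <= (n+1) * (Sn * Sm) by apply: ler_pM; nra.
      nra.
    lra.
  have L2 : n^+3 * (Qm - Qn) <= (n+1) * (Sn * Sm).
    have b1 : Qm * (Qm - Qn) <= 4 * x by nra.
    have b2 : n^+2 * (Qm - Qn) <= (n+1) * Qm by nra.
    have b3 : n^+2 * (Qm - Qn) <= (n+1) * Sm by rewrite /Sm; nra.
    have b4 : n * (n^+2 * (Qm - Qn)) <= Sn * ((n+1) * Sm).
      apply: ler_pM; [lra | apply: mulr_ge0; [exact: sqr_ge0 | lra] | rewrite /Sn; lra | exact: b3].
    have -> : n^+3 = n * n^+2 by rewrite exprS.
    lra.
  have Sdiff : Sm - Sn = (Tm - Tn) + (Qm - Qn) by rewrite /Sm /Sn; ring.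
  have E2 : n * (((n+1)^+2 - n^+2) * Sn - n^+2 * (Sm - Sn)) =
     n * ((n+1)^+2 - n^+2) * Sn - (n^+3 * (Tm - Tn) + n^+3 * (Qm - Qn)).
    rewrite Sdiff; ring.
  have U0 : 0 <= n * ((n+1)^+2 - n^+2) * Sn.
    apply: mulr_ge0; [apply: mulr_ge0; nra | rewrite /Sn; lra].
  have V1 : 0 <= n^+3 * (Tm - Tn) by apply: mulr_ge0; [apply: exprn_ge0 | lra].
  have V2 : 0 <= n^+3 * (Qm - Qn) by apply: mulr_ge0; [apply: exprn_ge0 | lra].
  rewrite ler_norml; apply/andP; split.
    have : -(3 * (n+1)) * (Sn * Sm) <= n * (Dm - Dn) * (Sn * Sm) by rewrite E E2; lra.
    by rewrite ler_pM2r.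
  have : n * (Dm - Dn) * (Sn * Sm) <= 3 * (n+1) * (Sn * Sm) by rewrite E E2; lra.
  by rewrite ler_pM2r.
have P3 : `|(n+1) * Dm - n * Dn| <= 4 * (n+1).
  have -> : (n+1) * Dm - n * Dn = Dm + n * (Dm - Dn) by ring.
  apply: le_trans (ler_normD _ _) _.
  rewrite (ger0_norm Dm0); lra.
have -> : ((n+1)^+2 * Tm + (n+1)*x*(Tm - Qm)) - (n^+2 * Tn + n*x*(Tn-Qn))
   = ((n+1)^+2 * Tm - n^+2 * Tn) + x * ((n+1) * Dm - n * Dn) by rewrite /Dm /Dn; ring.
apply: le_trans (ler_normD _ _) _.
rewrite normrM (ger0_norm P1') (@ger0_norm _ x); last lra.
have : x * `|(n + 1) * Dm - n * Dn| <= x * (4 * (n+1)) by rewrite ler_pM2l //; lra.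
lra.
Qed.

Lemma cube_bd (b c : R) : 0 <= b -> b <= c -> c <= b + 1 ->
  0 <= c^+3 - b^+3 <= 3 * c^+2.
Proof.
move=> b0 bc cb.
have -> : c^+3 - b^+3 = (c - b) * (c^+2 + c*b + b^+2) by ring.
have h0 : 0 <= c^+2 + c*b + b^+2 by nra.
apply/andP; split; first by apply: mulr_ge0; lra.
have h1 : c^+2 + c*b + b^+2 <= 3 * c^+2 by nra.
have : (c - b) * (c^+2 + c*b + b^+2) <= 1 * (3 * c^+2).
  apply: ler_pM; lra.
lra.
Qed.


Lemma combo (n x Tn Tm Qn Qm a b : R) : 0 <= n -> 1 <= x -> n <= x ->
  0 <= Tn -> Tn^+2 = n^+2 + 4*n*x ->
  0 <= Tm -> Tm^+2 = (n+1)^+2 + 4*(n+1)*x ->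
  0 <= Qn -> Qn^+2 = 4*n*x -> 0 <= Qm -> Qm^+2 = 4*(n+1)*x ->
  0 <= a -> a <= (n + Tn)/2 -> (n + Tn)/2 <= a + 1 ->
  0 <= b -> b <= (n + 1 + Tm)/2 -> (n + 1 + Tm)/2 <= b + 1 -> a <= b ->
  `| (S3 b - S3 a) - ((n+1)*x*Qm - n*x*Qn)/6 | <= 100 * ((n+1)*x).
Proof.
move=> n0 x1 nx Tn0 eTn Tm0 eTm Qn0 eQn Qm0 eQm a0 aal ala b0 bbl blb ab.
have K := @key _ _ _ _ _ _ n0 x1 nx Tn0 eTn Tm0 eTm Qn0 eQn Qm0 eQm.
set al := (n + Tn)/2 in aal ala.
set be := (n + 1 + Tm)/2 in bbl blb.
have TnTm : Tn <= Tm by nra.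
have albe : al <= be by rewrite /al /be; lra.
have Tm4 : Tm <= 4 * x by nra.
have mTm : n + 1 <= Tm by nra.
have be1 : 1 <= be by rewrite /be; lra.
have be2 : be^+2 <= 4 * ((n+1)*x).
  have -> : be^+2 = ((n+1)^+2 + 2*(n+1)*Tm + Tm^+2)/4 by rewrite /be; field.
  rewrite eTm.
  have : (n+1)*Tm <= (n+1)*(4*x) by apply: ler_wpM2l; lra.
  nra.
have al2 : al^+2 <= be^+2 by nra.
have eal : al^+3 - n*x*Qn/2 = (n^+3 + 3*n^+2*x + (n^+2*Tn + n*x*(Tn-Qn)))/2.
  have h : (n+Tn)^+3 = n^+3 + 3*n^+2*Tn + 3*n*Tn^+2 + Tn^+2*Tn by field.
  rewrite eTn in h.
  have -> : al^+3 = (n+Tn)^+3/8 by rewrite /al; field.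
  by rewrite h; field.
have ebe : be^+3 - (n+1)*x*Qm/2 =
   ((n+1)^+3 + 3*(n+1)^+2*x + ((n+1)^+2*Tm + (n+1)*x*(Tm-Qm)))/2.
  have h : (n+1+Tm)^+3 = (n+1)^+3 + 3*(n+1)^+2*Tm + 3*(n+1)*Tm^+2 + Tm^+2*Tm by field.
  rewrite eTm in h.
  have -> : be^+3 = (n+1+Tm)^+3/8 by rewrite /be; field.
  by rewrite h; field.
set Fm := (n+1)^+2*Tm + (n+1)*x*(Tm-Qm) in ebe K.
set Fn := n^+2*Tn + n*x*(Tn-Qn) in eal K.
have G : `| (be^+3 - al^+3) - ((n+1)*x*Qm - n*x*Qn)/2 | <= 21 * ((n+1)*x).
  have -> : (be^+3 - al^+3) - ((n+1)*x*Qm - n*x*Qn)/2 =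
    (be^+3 - (n+1)*x*Qm/2) - (al^+3 - n*x*Qn/2) by field.
  rewrite ebe eal.
  have -> : ((n+1)^+3 + 3*(n+1)^+2*x + Fm)/2 - (n^+3 + 3*n^+2*x + Fn)/2
     = ((3*n^+2 + 3*n + 1) + 3*x*(2*n+1))/2 + (Fm - Fn)/2 by field.
  apply: le_trans (ler_normD _ _) _.
  have h1 : 0 <= ((3*n^+2 + 3*n + 1) + 3*x*(2*n+1))/2 by nra.
  rewrite (ger0_norm h1) normrM (@ger0_norm _ (2^-1)); last lra.
  have h2 : ((3*n^+2 + 3*n + 1) + 3*x*(2*n+1)) <= 12 * ((n+1)*x) by nra.
  lra.
have cb := @cube_bd _ _ b0 bbl blb.
have ca := @cube_bd _ _ a0 aal ala.
have -> : (S3 b - S3 a) - ((n+1)*x*Qm - n*x*Qn)/6 =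
  ((be^+3 - al^+3) - ((n+1)*x*Qm - n*x*Qn)/2)/3
  - (be^+3 - b^+3)/3 + (al^+3 - a^+3)/3 + ((b^+2 - a^+2)/2 + (b - a)/6).
  by rewrite /S3; field.
set g := (be^+3 - al^+3) - _ in G *.
have br0 : 0 <= (b^+2 - a^+2)/2 + (b - a)/6 by nra.
have br1 : (b^+2 - a^+2)/2 + (b - a)/6 <= be^+2 by nra.
move: G; rewrite ler_norml => /andP [G1 G2].
rewrite ler_norml; apply/andP; split; lra.
Qed.
End K.

Theorem proposition3 (R : realType) :
  exists C : R, 0 < C /\
    forall (d : nat) (x : R), 1 <= x -> d%:R <= x ->
      `| Ssum d x
         - ((d.+1)%:R * Num.sqrt (d.+1)%:R - d%:R * Num.sqrt d%:R) / 3
             * (x * Num.sqrt x) |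
      <= C * ((d.+1)%:R * x).
Proof.
exists 100; split; first lra.
move=> d x x1 dx.
have em : (d.+1)%:R = d%:R + 1 :> R by rewrite -addn1 natrD.
rewrite em.
move: dx; set n : R := d%:R => nx.
have n0 : 0 <= n by rewrite /n ler0n.
have en : (Kd d x)%:~R = (`|Kd d x|%N)%:R :> R /\ Kd d x = (`|Kd d x|%N)%:Z /\
   (Kd d x)%:~R <= (n + Num.sqrt (n^+2 + 4*n*x))/2 < (Kd d x)%:~R + 1 /\
   0 <= Kd d x.
  have h0 : 0 <= (n + Num.sqrt (n^+2 + 4*n*x))/2.
    have := sqrtr_ge0 (n^+2 + 4*n*x); lra.
  have a0 : 0 <= Kd d x by rewrite /Kd floor_ge0.
  split; first by rewrite natr_absz ger0_norm.
  split; first by rewrite abszE ger0_norm.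
  split => //.
  have := floor_itv ((n + Num.sqrt (n^+2 + 4*n*x))/2).
  by rewrite intrD.
have em' : (d.+1)%:R = n + 1 :> R by rewrite em.
have eb : (Kd d.+1 x)%:~R = (`|Kd d.+1 x|%N)%:R :> R /\
   (Kd d.+1 x)%:~R <= (n + 1 + Num.sqrt ((n+1)^+2 + 4*(n+1)*x))/2 < (Kd d.+1 x)%:~R + 1 /\
   0 <= Kd d.+1 x.
  have h0 : 0 <= (n + 1 + Num.sqrt ((n+1)^+2 + 4*(n+1)*x))/2.
    have := sqrtr_ge0 ((n+1)^+2 + 4*(n+1)*x); lra.
  have a0 : 0 <= Kd d.+1 x by rewrite /Kd em' floor_ge0.
  split; first by rewrite natr_absz ger0_norm.
  split => //.
  have := floor_itv ((n + 1 + Num.sqrt ((n+1)^+2 + 4*(n+1)*x))/2).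
  by rewrite intrD /Kd em'.
have ab : Kd d x <= Kd d.+1 x.
  rewrite /Kd em' -/n; apply: le_floor.
  have : Num.sqrt (n^+2 + 4*n*x) <= Num.sqrt ((n+1)^+2 + 4*(n+1)*x).
    apply: ler_wsqrtr; nra.
  lra.
case: en => [ea [ea' [/andP [ea1 ea2] a0]]].
case: eb => [eb [/andP [eb1 eb2] b0]].
have abN : (`|Kd d x| <= `|Kd d.+1 x|)%N by rewrite -lez_nat !abszE (ger0_norm a0) (ger0_norm b0).
rewrite /Ssum ea' sum_split //.
rewrite -ea -eb.
have x0 : 0 <= x by lra.
set sx := Num.sqrt x.
have esx : sx^+2 = x by rewrite sqr_sqrtr.
have esn : (Num.sqrt n)^+2 = n by rewrite sqr_sqrtr.
have esm : (Num.sqrt (n+1))^+2 = n+1 by rewrite sqr_sqrtr //; lra.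
have sx0 : 0 <= sx := sqrtr_ge0 x.
have sn0 := sqrtr_ge0 n.
have sm0 := sqrtr_ge0 (n+1).
have -> : ((n + 1) * Num.sqrt (n + 1) - n * Num.sqrt n) / 3 * (x * sx) =
  ((n+1)*x*(2 * Num.sqrt (n+1) * sx) - n*x*(2 * Num.sqrt n * sx))/6 by field.
have Tn0 := sqrtr_ge0 (n^+2 + 4*n*x).
have Tm0 := sqrtr_ge0 ((n+1)^+2 + 4*(n+1)*x).
apply: (@combo R n x (Num.sqrt (n^+2+4*n*x)) (Num.sqrt ((n+1)^+2+4*(n+1)*x)) (2*Num.sqrt n*sx) (2*Num.sqrt (n+1)*sx)) => //.
all: try lra.
- by rewrite sqr_sqrtr //; nra.
- by rewrite sqr_sqrtr //; nra.
- apply: mulr_ge0 => //; apply: mulr_ge0 => //; lra.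
- have -> : (2 * Num.sqrt n * sx)^+2 = 4 * (Num.sqrt n)^+2 * sx^+2 by ring.
  by rewrite esn esx.
- apply: mulr_ge0 => //; apply: mulr_ge0 => //; lra.
- have -> : (2 * Num.sqrt (n+1) * sx)^+2 = 4 * (Num.sqrt (n+1))^+2 * sx^+2 by ring.
  by rewrite esm esx.
- by rewrite ler0z.
- by rewrite ler0z.
- by rewrite ler_int.
Qed.
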